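(* Let $p,q$ be positive integers, $z\in\mathbb{R}^p$, $w\in\mathbb{R}^q$, and let $e\in\mathbb{R}^p$ be the vector of all ones. Define $\psi:[0,+\infty)\to\mathbb{R}$ by $$\psi(\lambda):=-\lambda\|w\|+\left\langle e,\,[(\lambda+1)z-\|w\|e]^-\right\rangle,$$ and for $\lambda\ge0$ let $N(\lambda)$ be the $p\times p$ diagonal matrix $N(\lambda):=\operatorname{diag}\big(-\operatorname{sgn}([(\lambda+1)z-\|w\|e]^-)\big)$. Then $\psi$ is convex. Moreover, if $z^+\not\ge\|w\|e$ and $\langle z^-,e\rangle<\|w\|$, then: (1) for all $\lambda\ge0$, $-\|w\|+\langle e,N(\lambda)z\rangle\in\partial\psi(\lambda)$ and $-\|w\|+\langle e,N(\lambda)z\rangle<0$; (2) $\psi$ has a unique zero $\lambda_*>0$.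
   Context: For $\alpha\in\mathbb{R}$, $\alpha^+:=\max(\alpha,0)$ and $\alpha^-:=\max(-\alpha,0)$; for a vector $z\in\mathbb{R}^p$, $z^+$, $z^-$, $\operatorname{sgn}(z)$ are taken componentwise (with $\operatorname{sgn}(0)=0$), and $\operatorname{diag}(z)$ is the diagonal matrix with diagonal entries $z_1,\dots,z_p$. The order $\ge$ on vectors is componentwise, and $z^+\not\ge\|w\|e$ means that $z^+\ge\|w\|e$ fails. $\partial\psi(\lambda)$ denotes the subdifferential of the convex function $\psi$ at $\lambda$. *)

(* Defs.v *)
From HB Require Import structures.
From mathcomp Require Import all_boot all_order all_algebra.
From mathcomp Require Import reals.
Set Implicit Arguments. Unset Strict Implicit. Unset Printing Implicit Defensive.
Import Order.TTheory GRing.Theory Num.Theory.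
Local Open Scope ring_scope.

Section Defs.
Variable R : realType.

Definition pospart (a : R) : R := Num.max a 0.
Definition negpart (a : R) : R := Num.max (- a) 0.

Definition vpos n (z : 'cV[R]_n) : 'cV[R]_n := map_mx pospart z.
Definition vneg n (z : 'cV[R]_n) : 'cV[R]_n := map_mx negpart z.
Definition vsgn n (z : 'cV[R]_n) : 'cV[R]_n := map_mx (fun a => Num.sg a) z.

Definition ones n : 'cV[R]_n := const_mx 1.

Definition inner n (u v : 'cV[R]_n) : R := \sum_(i < n) u i 0 * v i 0.
Definition enorm n (w : 'cV[R]_n) : R := Num.sqrt (inner w w).

Definition vge n (u v : 'cV[R]_n) : Prop := forall i, v i 0 <= u i 0.

Definition psi p q (z : 'cV[R]_p) (w : 'cV[R]_q) (lam : R) : R :=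
  - lam * enorm w + inner (ones p) (vneg ((lam + 1) *: z - enorm w *: ones p)).

Definition Nmat p q (z : 'cV[R]_p) (w : 'cV[R]_q) (lam : R) : 'M[R]_p :=
  diag_mx (- vsgn (vneg ((lam + 1) *: z - enorm w *: ones p)))^T.

Definition convex_on (D : R -> Prop) (f : R -> R) : Prop :=
  forall x y t, D x -> D y -> 0 <= t -> t <= 1 ->
    f (t * x + (1 - t) * y) <= t * f x + (1 - t) * f y.

Definition subgrad (D : R -> Prop) (f : R -> R) (x g : R) : Prop :=
  forall y, D y -> f x + g * (y - x) <= f y.

End Defs.

Arguments ones {R} n.
Definition nonneg (R : realType) (x : R) : Prop := 0 <= x.

(* Main.v *)
Require Import Defs.
From HB Require Import structures.
From mathcomp Require Import all_boot all_order all_algebra.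
From mathcomp Require Import reals ring lra.
From mathcomp Require Import all_classical topology normedtype.
Import Order.TTheory GRing.Theory Num.Theory.
Import numFieldNormedType.Exports.
Local Open Scope ring_scope.

Section S.
Variable R : realType.
Variables (p q : nat) (z : 'cV[R]_p) (w : 'cV[R]_q).
Let W := enorm w.
Let a (lam : R) (i : 'I_p) := (lam + 1) * z i 0 - W.

Lemma psiE lam : psi z w lam = - lam * W + \sum_i negpart (a lam i).
Proof.
rewrite /psi /inner /vneg /ones /a; congr (_ + _).
by apply: eq_bigr => i _; rewrite !mxE mul1r mulr1.
Qed.

Let g lam := - W + inner (ones p) (Nmat z w lam *m z).

Lemma gE lam : g lam = - W + \sum_i (- Num.sg (negpart (a lam i)) * z i 0).
Proof.
rewrite /g /inner /Nmat /a; congr (_ + _); apply: eq_bigr => i _.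
by rewrite mul_diag_mx !mxE mul1r mulr1.
Qed.

Lemma negpart_ge0 (x : R) : 0 <= negpart x.
Proof. by rewrite /negpart le_max lexx orbT. Qed.

Lemma negpart_ge (x : R) : - x <= negpart x.
Proof. by rewrite /negpart le_max lexx. Qed.

Lemma negpart_convex (x y t : R) : 0 <= t -> t <= 1 ->
  negpart (t * x + (1 - t) * y) <= t * negpart x + (1 - t) * negpart y.
Proof.
move=> t0 t1; rewrite {1}/negpart ge_max; apply/andP; split.
  rewrite opprD -!mulrN lerD // ler_wpM2l ?subr_ge0 //; exact: negpart_ge.
by rewrite addr_ge0 // mulr_ge0 ?subr_ge0 // negpart_ge0.
Qed.

Lemma sg_negpart (x : R) : Num.sg (negpart x) = if x < 0 then 1 else 0.
Proof.
rewrite /negpart; case: ltP => h.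
  by rewrite max_l ?gtr0_sg // ?oppr_gt0 // ltW // oppr_gt0.
by rewrite max_r ?sgr0 // lerNl oppr0.
Qed.

Lemma psi_convex : convex_on (@nonneg R) (psi z w).
Proof.
move=> x y t _ _ t0 t1; rewrite !psiE.
have -> : - (t * x + (1 - t) * y) * W + \sum_i negpart (a (t * x + (1 - t) * y) i)
  = t * (- x * W) + (1 - t) * (- y * W) +
    \sum_i negpart (t * a x i + (1 - t) * a y i).
  congr (_ + _); first by ring.
  by apply: eq_bigr => i _; rewrite /a; congr negpart; ring.
rewrite !mulrDr addrACA lerD2l mulr_sumr mulr_sumr -big_split /=.
by apply: ler_sum => i _; apply: negpart_convex.
Qed.

Lemma term_sub x y i :
  negpart (a x i) + (- Num.sg (negpart (a x i)) * z i 0) * (y - x) <= negpart (a y i).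
Proof.
rewrite sg_negpart; have -> : a y i = a x i + (y - x) * z i 0 by rewrite /a; ring.
case: ltP => h.
  rewrite /negpart max_l; last by rewrite ltW // oppr_gt0.
  rewrite le_max; apply/orP; left.
  by rewrite le_eqVlt; apply/orP; left; apply/eqP; ring.
have -> : negpart (a x i) = 0 by rewrite /negpart max_r // lerNl oppr0.
by rewrite oppr0 !mul0r addr0 negpart_ge0.
Qed.

Lemma psi_sub x y : psi z w x + g x * (y - x) <= psi z w y.
Proof.
rewrite !psiE gE mulrDl mulr_suml addrACA.
have -> : - x * W + - W * (y - x) = - y * W by ring.
rewrite lerD2l -big_split /=; apply: ler_sum => i _; exact: term_sub.
Qed.

Lemma g_bound lam : g lam <= inner (vneg z) (ones p) - W.
Proof.
rewrite gE addrC lerD2r /inner; apply: ler_sum => i _.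
rewrite !mxE mulr1 sg_negpart; case: ifP => _.
  by rewrite mulN1r negpart_ge.
by rewrite oppr0 mul0r negpart_ge0.
Qed.

Lemma negpart_cont i : continuous (fun lam => negpart (a lam i)).
Proof.
move=> x; rewrite /negpart /a.
apply: (@continuous_max _ _ (fun lam : R => - ((lam + 1) * z i 0 - W)) (fun _ => 0)).
  apply: continuousN; apply: continuousB; last exact: cst_continuous.
  apply: (@continuousM _ _ (fun lam : R => lam + 1) (fun _ => z i 0)); last exact: cst_continuous.
  apply: continuousD; first exact: cvg_id.
  exact: cst_continuous.
exact: cst_continuous.
Qed.

Lemma psi_cont : continuous (psi z w).
Proof.
have -> : psi z w = fun lam => - lam * W + \sum_i negpart (a lam i).
  by apply: funext => lam; exact: psiE.
move=> x; apply: (@continuousD _ _ _ (fun lam : R => - lam * W) (fun lam => \sum_i negpart (a lam i))).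
  apply: (@continuousM _ _ (fun lam : R => - lam) (fun _ => W)); last exact: cst_continuous.
  apply: continuousN; exact: cvg_id.
rewrite /=.
have H : forall s : seq 'I_p, {for x, continuous (fun lam => \sum_(i <- s) negpart (a lam i))}.
  elim => [|j s IH].
    have -> : (fun lam => \sum_(i <- [::]) negpart (a lam i)) = fun _ => 0.
      by apply: funext => ?; rewrite big_nil.
    exact: cst_continuous.
  have -> : (fun lam => \sum_(i <- j :: s) negpart (a lam i)) =
     (fun lam => negpart (a lam j)) + (fun lam => \sum_(i <- s) negpart (a lam i)).
    by apply: funext => ?; rewrite big_cons.
  exact: continuousD (negpart_cont j x) IH.
exact: H.
Qed.
End S.

Theorem proposition2 (R : realType) (p q : nat) (hp : (0 < p)%N) (hq : (0 < q)%N)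
    (z : 'cV[R]_p) (w : 'cV[R]_q) :
  convex_on (@nonneg R) (psi z w) /\
  (~ vge (vpos z) (enorm w *: ones p) ->
   inner (vneg z) (ones p) < enorm w ->
   (forall lam : R, 0 <= lam ->
      subgrad (@nonneg R) (psi z w) lam
        (- enorm w + inner (ones p) (Nmat z w lam *m z)) /\
      - enorm w + inner (ones p) (Nmat z w lam *m z) < 0) /\
   (exists lamstar : R, 0 < lamstar /\ psi z w lamstar = 0 /\
      forall mu : R, 0 <= mu -> psi z w mu = 0 -> mu = lamstar)).
Proof.
split; first exact: psi_convex.
move=> nge hneg.
set W := enorm w in hneg *.
set g := fun lam => - W + inner (ones p) (Nmat z w lam *m z).
set d := W - inner (vneg z) (ones p).
have d0 : 0 < d by rewrite /d subr_gt0.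
have gb : forall lam, g lam <= - d.
  by move=> lam; rewrite /d opprB; exact: g_bound.
have gneg : forall lam, g lam < 0.
  by move=> lam; apply: le_lt_trans (gb lam) _; rewrite oppr_lt0.
have sub : forall x y, psi z w x + g x * (y - x) <= psi z w y.
  by move=> x y; exact: psi_sub.
split.
  by move=> lam _; split; [move=> y _; exact: sub | exact: gneg].
have decr : forall x y, x < y -> psi z w y < psi z w x.
  move=> x y xy; apply: lt_le_trans (sub y x).
  rewrite ltrDl; have := gneg y; nra.
have psi0 : 0 < psi z w 0.
  rewrite psiE mulNr mul0r oppr0 add0r.
  case: (pickP (fun i => pospart (z i 0) < W)) => [i hi|hn]; last first.
    exfalso; apply: nge => i; rewrite !mxE mulr1.
    by move: (hn i) => /= /negbT; rewrite -leNgt.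
  rewrite (bigD1 i) //=.
  have h1 : 0 < negpart ((0 + 1) * z i 0 - W).
    apply: (@lt_le_trans _ _ _ _ _ _ (@negpart_ge R _)); rewrite add0r mul1r opprB subr_gt0.
    by apply: le_lt_trans hi; rewrite /pospart le_max lexx.
  apply: (lt_le_trans h1); rewrite lerDl.
  by apply: sumr_ge0 => j _; exact: negpart_ge0.
set L := psi z w 0 / d.
have L0 : 0 <= L by rewrite /L divr_ge0 // ltW.
have psiL : psi z w L <= 0.
  have h := sub L 0; have hg := gb L.
  have e : d * L = psi z w 0 by rewrite /L mulrC divfK // gt_eqF.
  have : g L * L <= - d * L by rewrite ler_wpM2r.
  rewrite mulNr e; move: h; rewrite sub0r mulrN; lra.
have [c cI pc] : exists2 c, c \in `[0, L] & psi z w c = 0.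
  apply: IVT => //.
    by apply: continuous_subspaceT => x; exact: psi_cont.
  apply/andP; split.
    by rewrite ge_min psiL orbT.
  by rewrite le_max ltW.
have c0 : 0 <= c by move: cI; rewrite in_itv /= => /andP[].
exists c; split.
  rewrite lt_neqAle c0 andbT; apply/eqP => c0'.
  by move: pc; rewrite -c0' => h; move: psi0; rewrite h ltxx.
split => // mu mu0 pmu.
case: (ltgtP mu c) => // h.
  by have := decr _ _ h; rewrite pc pmu ltxx.
by have := decr _ _ h; rewrite pc pmu ltxx.
Qed.
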